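(* Let $Z_1,\ldots,Z_n$ be i.i.d. from a distribution $\mathcal{D}$ on a set $\mathbb{Z}$, let $\ell:\Theta\times\mathbb{Z}\to[0,\infty)$ be a loss function with risk $R(\theta)=\mathbb{E}_{Z\sim\mathcal{D}}\{\ell(\theta;Z)\}$ and risk minimizer $\theta^*=\arg\min_{\theta\in\Theta}R(\theta)$. Suppose the strong central condition holds with learning rate $\bar\omega>0$. Let the sample $S=(Z_1,\ldots,Z_n)$ be partitioned as $S=S_1\sqcup S_2$ into two sub-samples of sizes $n_1$ and $n_2$, let $\widehat\theta_{S_1}$ be any AERM computed on $S_1$, and for $\omega\ge0$ define the offline GUe-value $$G_{n,\mathrm{off}}(\theta)=\exp\bigl[-\omega\, n_2\{\widehat R_{S_2}(\widehat\theta_{S_1})-\widehat R_{S_2}(\theta)\}\bigr],$$ where $\widehat R_{S_2}(\theta)=n_2^{-1}\sum_{Z\in S_2}\ell(\theta;Z)$. If $\omega\in[0,\bar\omega)$, then $G_{n,\mathrm{off}}(\theta^* )$ is an e-value, i.e. $\mathbb{E}\{G_{n,\mathrm{off}}(\theta^* )\}\le 1$.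
   Context: For a finite sub-sample $T$ of size $m$, $\widehat R_T(\theta)=m^{-1}\sum_{Z\in T}\ell(\theta;Z)$. For fixed constants $\varepsilon,\delta\ge0$, an $(\varepsilon,\delta)$-AERM on $T$ is an estimator $\widehat\theta_T$ (a measurable function of $T$) with $\widehat R_T(\widehat\theta_T)\le\inf_{\theta\in\Theta}\widehat R_T(\theta)+\delta/m^{1+\varepsilon}$; an AERM is an $(\varepsilon,\delta)$-AERM for some such constants. Strong central condition with learning rate $\bar\omega>0$: $\mathbb{E}_{Z\sim\mathcal{D}}\exp[-\omega\{\ell(\theta;Z)-\ell(\theta^*;Z)\}]\le1$ for all $\theta\in\Theta$ and all $\omega\in[0,\bar\omega)$. An e-value is a non-negative random variable with expectation at most 1. *)

(* Defs.v *)
From HB Require Import structures.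
From mathcomp Require Import all_boot all_order all_algebra.
From mathcomp Require Import all_classical all_reals all_analysis.
Set Implicit Arguments. Unset Strict Implicit. Unset Printing Implicit Defensive.
Import Order.TTheory GRing.Theory Num.Theory.
Local Open Scope classical_set_scope.
Local Open Scope ring_scope.

Definition emp_risk (R : realType) (Theta Z : Type) (loss : Theta -> Z -> R)
  (m : nat) (T : m.-tuple Z) (theta : Theta) : R :=
  (m%:R)^-1 * \sum_(i < m) loss theta (tnth T i).

Definition is_AERM_eps_delta (R : realType) (Theta Z : Type)
  (loss : Theta -> Z -> R) (m : nat) (theta_hat : m.-tuple Z -> Theta)
  (eps delta : R) : Prop :=
  forall T : m.-tuple Z,
    ((emp_risk loss T (theta_hat T))%:E <=
     ereal_inf [set (emp_risk loss T th)%:E | th in [set: Theta]]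
       + (delta / (m%:R `^ (1 + eps)))%:E)%E.

Definition is_AERM (R : realType) (Theta Z : Type)
  (loss : Theta -> Z -> R) (m : nat) (theta_hat : m.-tuple Z -> Theta) : Prop :=
  exists eps delta : R, 0 <= eps /\ 0 <= delta /\
    is_AERM_eps_delta loss theta_hat eps delta.

Definition risk d (R : realType) (Zs : measurableType d) (D : probability Zs R)
  (Theta : Type) (loss : Theta -> Zs -> R) (theta : Theta) : \bar R :=
  (\int[D]_z (loss theta z)%:E)%E.

Definition strong_central_condition d (R : realType) (Zs : measurableType d)
  (D : probability Zs R) (Theta : Type) (loss : Theta -> Zs -> R)
  (theta_star : Theta) (wbar : R) : Prop :=
  forall (theta : Theta) (w : R), 0 <= w -> w < wbar ->
    (\int[D]_z (expR (- w * (loss theta z - loss theta_star z)))%:E <= 1)%E.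

Definition mutually_independent d d' (T : measurableType d) (R : realType)
  (P : probability T R) (Zs : measurableType d') (n : nat)
  (X : 'I_n -> T -> Zs) : Prop :=
  forall A : 'I_n -> set Zs, (forall i, measurable (A i)) ->
    P (\bigcap_i (X i @^-1` A i)) = (\prod_(i < n) P (X i @^-1` A i))%E.

Definition iid d d' (T : measurableType d) (R : realType)
  (P : probability T R) (Zs : measurableType d') (D : probability Zs R)
  (n : nat) (X : 'I_n -> T -> Zs) : Prop :=
  [/\ forall i, measurable_fun [set: T] (X i),
      forall i A, measurable A -> P (X i @^-1` A) = D A
    & mutually_independent P X].

Definition subsample d (T : measurableType d) (Zs : Type) (n m : nat)
  (X : 'I_n -> T -> Zs) (f : 'I_m -> 'I_n) (x : T) : m.-tuple Zs :=
  [tuple X (f j) x | j < m].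

Definition G_off d (T : measurableType d) (R : realType) (Theta Zs : Type)
  (loss : Theta -> Zs -> R) (n n1 n2 : nat) (X : 'I_n -> T -> Zs)
  (f1 : 'I_n1 -> 'I_n) (f2 : 'I_n2 -> 'I_n)
  (theta_hat : n1.-tuple Zs -> Theta) (w : R) (theta : Theta) (x : T) : R :=
  let S1 := subsample X f1 x in
  let S2 := subsample X f2 x in
  expR (- w * (n2%:R * (emp_risk loss S2 (theta_hat S1) - emp_risk loss S2 theta))).

(* Main.v *)
Require Import Defs.
From HB Require Import structures.
From mathcomp Require Import all_boot all_order all_algebra.
From mathcomp Require Import all_classical all_reals all_analysis.
From mathcomp Require Import measurable_realfun.
Import Order.TTheory GRing.Theory Num.Theory.
Local Open Scope classical_set_scope.
Local Open Scope ring_scope.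
Set Implicit Arguments. Unset Strict Implicit.

Definition pf {d d'} {T1 : measurableType d} {T2 : measurableType d'} {R : realType}
  (m : set T1 -> \bar R) {f : T1 -> T2}
  (mf : measurable_fun [set: T1] f) := pushforward m f.

Section pf.
Local Open Scope ereal_scope.
Context d d' (T1 : measurableType d) (T2 : measurableType d') (R : realType).
Variables (m : {measure set T1 -> \bar R}) (f : T1 -> T2).
Variable mf : measurable_fun [set: T1] f.

Let pf0 : pf m mf set0 = 0.
Proof. by rewrite /pf /pushforward preimage_set0 measure0. Qed.

Let pf_ge0 A : 0 <= pf m mf A.
Proof. exact: measure_ge0. Qed.

Let pf_sigma_additive : semi_sigma_additive (pf m mf).
Proof.
move=> F mF tF mUF; rewrite /pf /pushforward preimage_bigcup.
apply: measure_semi_sigma_additive.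
- by move=> n; rewrite -[X in measurable X]setTI; exact: mf.
- apply/trivIsetP => /= i j _ _ ij; rewrite -preimage_setI.
  by move/trivIsetP : tF => /(_ _ _ _ _ ij) ->//; rewrite preimage_set0.
- by rewrite -preimage_bigcup -[X in measurable X]setTI; exact: mf.
Qed.

HB.instance Definition _ := isMeasure.Build _ _ _
  (pf m mf) pf0 pf_ge0 pf_sigma_additive.
End pf.

Definition Gcyl {dz} (Zs : measurableType dz) n : set (set (n.-tuple Zs)) :=
  [set C | exists A : 'I_n -> set Zs, (forall k, measurable (A k)) /\
     C = [set t | forall k, A k (tnth t k)]].
Arguments Gcyl {dz} Zs n.

Lemma Gcyl_meas dz (Zs : measurableType dz) n : Gcyl Zs n `<=` measurable.
Proof.
move=> _ [A [mA ->]].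
have -> : [set t : n.-tuple Zs | forall k, A k (tnth t k)] =
  \bigcap_(k in [set: 'I_n]) ((@tnth n Zs)^~ k @^-1` A k).
  by apply/seteqP; split => t /= H k; [move=> _|]; apply: H.
apply: fin_bigcap_measurable; first exact: finite_finset.
move=> k _; rewrite -[X in measurable X]setTI; exact: measurable_tnth.
Qed.

Lemma Gcyl_setI dz (Zs : measurableType dz) n : setI_closed (Gcyl Zs n).
Proof.
move=> _ _ [A [mA ->]] [B [mB ->]].
exists (fun k => A k `&` B k); split; first by move=> k; exact: measurableI.
by apply/seteqP; split => t /=; [move=> [H1 H2] k; split|move=> H; split => k; case: (H k)].
Qed.

Lemma Gcyl_gen dz (Zs : measurableType dz) n (A : set (n.-tuple Zs)) :
  measurable A -> <<s Gcyl Zs n >> A.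
Proof.
move=> mA; apply: (smallest_sub _ _ mA).
  exact: smallest_sigma_algebra.
rewrite -bigcup_seq => _ [i _ [B mB <-]].
apply: sub_sigma_algebra.
exists (fun k => if k == i then B else setT); split.
  by move=> k; case: eqP.
apply/seteqP; split => t /=.
  by move=> [_ Bt] k; case: eqP => // ->.
by move=> H; split => //; have := H i; rewrite eqxx.
Qed.

Definition Ymask {d} {Omega : measurableType d} {dz} {Zs : measurableType dz} {n}
  (Z : 'I_n -> Omega -> Zs) (keep : pred 'I_n) (w : Omega) : n.-tuple Zs :=
  [tuple (if keep k then Z k w else point) | k < n].

Lemma measurable_Ymask d (Omega : measurableType d) dz (Zs : measurableType dz) n
  (Z : 'I_n -> Omega -> Zs) (keep : pred 'I_n) :
  (forall i, measurable_fun setT (Z i)) -> measurable_fun setT (Ymask Z keep).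
Proof.
move=> mZ; apply/measurable_fun_tnthP => k.
have -> : ((@tnth n Zs)^~ k \o Ymask Z keep) = (fun w => if keep k then Z k w else point).
  by apply/funext => w; rewrite /= tnth_mktuple.
by case: (keep k) => //; exact: measurable_cst.
Qed.

Lemma indep_prod (R : realType) d (Omega : measurableType d) (P : probability Omega R)
  dz (Zs : measurableType dz) (D : probability Zs R) n (Z : 'I_n -> Omega -> Zs)
  (Ziid : iid P D Z) (A : 'I_n -> set Zs) : (forall k, measurable (A k)) ->
  P [set w | forall k, A k (Z k w)] = (\prod_(k < n) D (A k))%E.
Proof.
case: Ziid => mZ lawZ ind mA.
have -> : [set w | forall k, A k (Z k w)] = \bigcap_k (Z k @^-1` A k).
  by apply/seteqP; split => w /= H k; [move=> _|]; apply: H.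
rewrite ind //; apply: eq_bigr => k _; exact: lawZ.
Qed.

Lemma rect_indep (R : realType) d (Omega : measurableType d) (P : probability Omega R)
  dz (Zs : measurableType dz) (D : probability Zs R) n (Z : 'I_n -> Omega -> Zs)
  (Ziid : iid P D Z) (keep : pred 'I_n) (i : 'I_n) (ki : keep i = false)
  (A : set (n.-tuple Zs)) (B : set Zs) : measurable A -> measurable B ->
  P (Ymask Z keep @^-1` A `&` Z i @^-1` B) = (P (Ymask Z keep @^-1` A) * D B)%E.
Proof.
move=> mA mB.
have [mZ lawZ _] := Ziid.
have mY := measurable_Ymask keep mZ.
have mE : measurable (Z i @^-1` B) by rewrite -[X in measurable X]setTI; exact: mZ.
have DB0 : (0 <= D B)%E by exact: measure_ge0.
have DBfin : D B \is a fin_num.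
  by rewrite ge0_fin_numE // (le_lt_trans (probability_le1 D mB)) // ltry.
pose r : {nonneg R} := NngNum (fine_ge0 DB0).
pose m1 := pf (mrestr P mE) mY.
pose m2 := mscale r (pf P mY).
have key : m1 A = m2 A.
  apply: (g_sigma_algebra_measure_unique (Gcyl Zs n) (@Gcyl_meas _ Zs n) (fun _ => setT) _ _ m1 m2 (@Gcyl_setI _ Zs n) _ _ A (Gcyl_gen mA)).
  - move=> _; exists (fun _ => setT); split => //.
    by apply/seteqP; split.
  - by apply/seteqP; split => // t _; exists 0%N.
  - move=> _ [Ak [mAk ->]].
    rewrite /m1 /m2 /=; rewrite /pf /mscale /mrestr /pushforward /=.
    rewrite /pf /pushforward /= fineK //.
    have Ypre : Ymask Z keep @^-1` [set t | forall k, Ak k (tnth t k)] =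
        [set w | forall k, Ak k (if keep k then Z k w else point)].
      by apply/seteqP; split => w /= H k; have := H k; rewrite tnth_mktuple.
    rewrite Ypre.
    case: (pselect (forall k, ~~ keep k -> Ak k point)) => [c|nc].
      pose A' k := if keep k then Ak k else setT.
      have mA' k : measurable (A' k) by rewrite /A'; case: ifP.
      have E1 : [set w | forall k, Ak k (if keep k then Z k w else point)] =
          [set w | forall k, A' k (Z k w)].
        apply/seteqP; split => w /= H k; have := H k; rewrite /A'; case: ifP => kk //.
        by move=> _; apply: c; rewrite kk.
      pose A'' k := if k == i then B else A' k.
      have mA'' k : measurable (A'' k) by rewrite /A''; case: eqP.
      have E2 : [set w | forall k, A' k (Z k w)] `&` Z i @^-1` B =
          [set w | forall k, A'' k (Z k w)].
        apply/seteqP; split => w /=.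
          by move=> [H Hb] k; rewrite /A''; case: eqP => [->//|_]; exact: H.
        move=> H; split; last by have := H i; rewrite /A'' eqxx.
        by move=> k; have := H k; rewrite /A''; case: eqP => [->|//]; rewrite /A' ki.
      rewrite E1 E2 !(indep_prod Ziid) //.
      rewrite (bigD1 i) //= [X in _ = (_ * X)%E](bigD1 i) //= /A'' eqxx /A' ki probability_setT mul1e.
      by congr (_ * _)%E; apply: eq_bigr => k /negbTE ->.
    have [k /not_implyP [kk nA]] := (existsNP _).2 nc.
    have -> : [set w | forall k, Ak k (if keep k then Z k w else point)] = set0.
      apply/seteqP; split => w // H; apply: nA; have := H k; by rewrite (negbTE kk).
    by rewrite set0I measure0 mule0.
  - move=> _; rewrite /m1 /=; rewrite /pf /mrestr /pushforward /= preimage_setT setTI.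
    exact: (le_lt_trans (probability_le1 P mE) (ltry _)).
move: key; rewrite /m1 /m2 /mscale /pf /mrestr /pushforward /= fineK //.
by rewrite muleC.
Qed.

Lemma freeze (R : realType) d (Omega : measurableType d) (P : probability Omega R)
  dz (Zs : measurableType dz) (D : probability Zs R)
  dt (T' : measurableType dt) (Y : Omega -> T') (mY : measurable_fun setT Y)
  (X : Omega -> Zs) (mX : measurable_fun setT X)
  (hind : forall A B, measurable A -> measurable B ->
     P (Y @^-1` A `&` X @^-1` B) = (P (Y @^-1` A) * D B)%E)
  (phi : T' * Zs -> \bar R) (mphi : measurable_fun setT phi)
  (phi0 : forall p, (0 <= phi p)%E) :
  (\int[P]_w phi (Y w, X w) = \int[P]_w fubini_F D phi (Y w))%E.
Proof.
have mW : measurable_fun setT (fun w => (Y w, X w)) by exact: measurable_fun_pair.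
pose Wm : {mfun Omega >-> (T' * Zs)%type} := HB.pack (fun w => (Y w, X w)) (isMeasurableFun.Build _ _ _ _ _ mW).
pose Ym : {mfun Omega >-> T'} := HB.pack Y (isMeasurableFun.Build _ _ _ _ Y mY).
transitivity (\int[distribution P Wm]_p phi p)%E.
  by rewrite (ge0_integral_distribution Wm mphi phi0).
transitivity (\int[distribution P Ym \x D]_p phi p)%E.
  apply: eq_measure_integral => A mA _.
  apply/esym/product_measure_unique => //.
rewrite (@fubini_tonelli1 _ _ _ _ _ (distribution P Ym) D phi mphi phi0).
rewrite (ge0_integral_distribution Ym) //.
  exact: measurable_fun_fubini_tonelli_F.
by move=> y; apply: integral_ge0 => z _; exact: phi0.
Qed.

Unset Implicit Arguments. Set Strict Implicit.

Theorem lemma2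
  (R : realType)
  (* underlying probability space *)
  (d : measure_display) (Omega : measurableType d) (P : probability Omega R)
  (* data space and parameter space *)
  (dz : measure_display) (Zs : measurableType dz) (D : probability Zs R)
  (dt : measure_display) (Theta : measurableType dt)
  (* loss l : Theta x Z -> [0, oo), jointly measurable *)
  (loss : Theta -> Zs -> R)
  (loss_ge0 : forall th z, 0 <= loss th z)
  (loss_meas : measurable_fun [set: Theta * Zs] (fun p => loss p.1 p.2))
  (* risk minimizer theta* *)
  (theta_star : Theta)
  (theta_star_min : forall th, (risk D loss theta_star <= risk D loss th)%E)
  (* strong central condition *)
  (wbar : R) (wbar_gt0 : 0 < wbar)
  (central : strong_central_condition D loss theta_star wbar)
  (* i.i.d. sample Z_1..Z_n *)
  (n : nat) (Z : 'I_n -> Omega -> Zs) (Z_iid : iid P D Z)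
  (* partition S = S1 |_| S2 with |S1| = n1, |S2| = n2 *)
  (n1 n2 : nat) (n1_gt0 : (0 < n1)%N) (n2_gt0 : (0 < n2)%N)
  (f1 : 'I_n1 -> 'I_n) (f2 : 'I_n2 -> 'I_n)
  (f1_inj : injective f1) (f2_inj : injective f2)
  (f12_disj : forall j k, f1 j <> f2 k)
  (f12_cover : forall i, (exists j, f1 j = i) \/ (exists k, f2 k = i))
  (* AERM computed on S1, a measurable function of the sub-sample *)
  (theta_hat : n1.-tuple Zs -> Theta)
  (theta_hat_meas : measurable_fun [set: n1.-tuple Zs] theta_hat)
  (theta_hat_AERM : is_AERM loss theta_hat)
  (w : R) (w_ge0 : 0 <= w) (w_lt : w < wbar) :
  ('E_P[G_off loss Z f1 f2 theta_hat w theta_star] <= 1)%E.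
Proof.
have [mZ lawZ indZ] := Z_iid.
pose h (th : Theta) (z : Zs) : R := expR (- w * (loss th z - loss theta_star z)).
have h_ge0 th z : 0 <= h th z by exact: expR_ge0.
have mh : forall dT (T : measurableType dT) (tf : T -> Theta) (zf : T -> Zs),
    measurable_fun setT tf -> measurable_fun setT zf ->
    measurable_fun setT (fun x => h (tf x) (zf x)).
  move=> dT T tf zf mtf mzf.
  apply: measurableT_comp; first exact: measurable_expR.
  apply: measurable_funM; first exact: measurable_cst.
  apply: measurable_funB.
    exact: (measurableT_comp loss_meas (measurable_fun_pair mtf mzf)).
  exact: (measurableT_comp loss_meas (measurable_fun_pair (measurable_cst _) mzf)).
have mprod : forall (j : nat) dT (T : measurableType dT) (tf : T -> Theta) (zf : 'I_n2 -> T -> Zs),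
    measurable_fun setT tf -> (forall k, measurable_fun setT (zf k)) ->
    measurable_fun setT (fun x => \prod_(k < n2 | (k < j)%N) h (tf x) (zf k x)).
  move=> j dT T tf zf mtf mzf.
  have -> : (fun x => \prod_(k < n2 | (k < j)%N) h (tf x) (zf k x)) =
      (fun x => \prod_(k < n2) (if (k < j)%N then h (tf x) (zf k x) else 1)).
    by apply/funext => x; rewrite big_mkcond.
  apply: measurable_prod => k _; case: (k < j)%N; last exact: measurable_cst.
  exact: mh.
pose X1 (om : Omega) : n1.-tuple Zs := subsample Z f1 om.
have mX1 : measurable_fun setT X1.
  apply/measurable_fun_tnthP => a.
  have -> : ((@tnth n1 Zs)^~ a \o X1) = Z (f1 a).
    by apply/funext => om; rewrite /= /X1 /subsample tnth_mktuple.
  exact: mZ.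
pose Gj (j : nat) (om : Omega) : R :=
  \prod_(k < n2 | (k < j)%N) h (theta_hat (X1 om)) (Z (f2 k) om).
have mGj j : measurable_fun setT (Gj j).
  apply: mprod; [exact: (measurableT_comp theta_hat_meas mX1)|by move=> k; exact: mZ].
have Gj_ge0 j om : 0 <= Gj j om by apply: prodr_ge0 => k _.
pose proj1 (t : n.-tuple Zs) : n1.-tuple Zs := [tuple tnth t (f1 a) | a < n1].
have mproj1 : measurable_fun setT proj1.
  apply/measurable_fun_tnthP => a.
  have -> : ((@tnth n1 Zs)^~ a \o proj1) = (@tnth n Zs)^~ (f1 a).
    by apply/funext => t; rewrite /= /proj1 tnth_mktuple.
  exact: measurable_tnth.
have step : forall j, (j <= n2)%N -> (\int[P]_om (Gj j om)%:E <= 1)%E.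
  elim=> [_|j IH jlt].
    have -> : (fun om => (Gj 0%N om)%:E) = cst 1%:E.
      by apply/funext => om; rewrite /Gj big_pred0.
    by rewrite integral_cst // mul1e; exact: probability_le1.
  pose jo : 'I_n2 := Ordinal jlt.
  pose keepj : pred 'I_n := fun i => [forall k : 'I_n2, (f2 k == i) ==> (k < j)%N].
  have kfalse : keepj (f2 jo) = false.
    apply/negbTE/forallPn; exists jo; by rewrite eqxx /= ltnn.
  have keep1 a : keepj (f1 a).
    apply/forallP => k; apply/implyP => /eqP e; exfalso; exact: (f12_disj a k (esym e)).
  have keep2 (k : 'I_n2) : (k < j)%N -> keepj (f2 k).
    move=> kj; apply/forallP => k'; apply/implyP => /eqP /f2_inj ->; exact: kj.
  pose Y := Ymask Z keepj.
  have mY : measurable_fun setT Y by exact: measurable_Ymask.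
  have proj1Y om : proj1 (Y om) = X1 om.
    apply: eq_from_tnth => a; by rewrite /proj1 /Y /Ymask /X1 /subsample !tnth_mktuple keep1.
  pose Hj (t : n.-tuple Zs) : R :=
    \prod_(k < n2 | (k < j)%N) h (theta_hat (proj1 t)) (tnth t (f2 k)).
  have HjY om : Hj (Y om) = Gj j om.
    apply: eq_bigr => k kj; rewrite proj1Y /Y /Ymask tnth_mktuple keep2 //.
  have Hj_ge0 t : 0 <= Hj t by apply: prodr_ge0 => k _.
  pose phi (p : n.-tuple Zs * Zs) : \bar R :=
    (Hj p.1 * h (theta_hat (proj1 p.1)) p.2)%:E.
  have phi0 p : (0 <= phi p)%E by rewrite lee_fin mulr_ge0.
  have mphi : measurable_fun setT phi.
    apply/measurable_EFinP; apply: measurable_funM.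
      apply: (mprod j _ _ (fun p : n.-tuple Zs * Zs => theta_hat (proj1 p.1))
                (fun k p => tnth p.1 (f2 k))).
        exact: (measurableT_comp theta_hat_meas (measurableT_comp mproj1 measurable_fst)).
      by move=> k; exact: (measurableT_comp (measurable_tnth _) measurable_fst).
    apply: (mh _ _ (fun p : n.-tuple Zs * Zs => theta_hat (proj1 p.1)) snd).
      exact: (measurableT_comp theta_hat_meas (measurableT_comp mproj1 measurable_fst)).
    exact: measurable_snd.
  have -> : (fun om => (Gj j.+1 om)%:E) = (fun om => phi (Y om, Z (f2 jo) om)).
    apply/funext => om; rewrite /phi /= HjY proj1Y; congr (_%:E).
    rewrite /Gj (bigD1 jo) //= mulrC; congr (_ * _).
    apply: eq_bigl => k; rewrite ltnS ltn_neqAle andbC; by congr (_ && _).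
  rewrite (@freeze R d Omega P dz Zs D _ _ Y mY _ (mZ (f2 jo)) _ phi mphi phi0); last first.
    by move=> A B mA mB; exact: (rect_indep Z_iid kfalse).
  apply: le_trans (IH (ltnW jlt)).
  apply: ge0_le_integral => //.
  - by move=> om _; apply: integral_ge0 => z _; exact: phi0.
  - exact: (measurableT_comp (measurable_fun_fubini_tonelli_F _ mphi phi0) mY).
  - exact/measurable_EFinP.
  move=> om _; rewrite /fubini_F /phi /=.
  under eq_integral do rewrite EFinM.
  rewrite ge0_integralZl //; last 3 first.
  - apply/measurable_EFinP; apply: (mh _ _ (fun _ => theta_hat (proj1 (Y om))) id) => //.
  - by move=> z _; rewrite lee_fin.
  - by rewrite lee_fin.
  rewrite HjY -[X in (_ <= X)%E]mule1; apply: lee_wpmul2l; first by rewrite lee_fin.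
  exact: central.
rewrite unlock.
have -> : (fun om => (G_off loss Z f1 f2 theta_hat w theta_star om)%:E) =
    (fun om => (Gj n2 om)%:E).
  apply/funext => om; congr (_%:E).
  rewrite /G_off /emp_risk.
  rewrite -mulrBr [n2%:R * _]mulrA mulfV ?mul1r; last by rewrite pnatr_eq0 -lt0n.
  rewrite -sumrB mulr_sumr expR_sum /Gj.
  symmetry; apply: eq_big => [k|k _]; first exact: ltn_ord.
  by rewrite /h /X1 /subsample tnth_mktuple.
exact: step.
Qed.
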